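(* Let $x_1<x_2$, $u_0\in C^4([x_1,x_2])$ and $u_1\in C^3([x_1,x_2])$. Consider the system for $(R,S,W)(x,t)$: \[ \begin{cases} R_t+2t^2R_x=\dfrac{R-S}{2t}-2t^2\big(u_1'(x)+u_0''(x)t\big),\\[4pt] S_t-2t^2S_x=\dfrac{S-R}{2t}+2t^2\big(u_1'(x)-u_0''(x)t\big),\\[4pt] W_t-2t^2W_x=-2t\big(R+u_1(x)\big), \end{cases} \] with boundary conditions $(R,S,W)(x,0)=(0,0,0)$ and $(R_t,S_t,W_t)(x,0)=(0,0,0)$ for $x\in[x_1,x_2]$. Then there exists a constant $\tilde\delta$ with $0<\tilde\delta\le\sqrt[3]{\frac{3(x_2-x_1)}{4}}$ such that this boundary problem has a classical solution in the region \[ \widetilde D_{\tilde\delta}=\Big\{(x,t):\ 0\le t\le\tilde\delta,\ x_1+\tfrac23t^3\le x\le x_2-\tfrac23t^3\Big\}. \] *)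

(* Defs.v *)
From Stdlib Require Import Reals Lra.
Open Scope R_scope.

Definition Icc (a b x : R) : Prop := a <= x <= b.

Definition deriv_within (D : R -> Prop) (f : R -> R) (x l : R) : Prop :=
  forall eps, 0 < eps -> exists delta, 0 < delta /\
    forall y, D y -> Rabs (y - x) < delta ->
      Rabs (f y - f x - l * (y - x)) <= eps * Rabs (y - x).

Definition cont_within (D : R -> Prop) (f : R -> R) (x : R) : Prop :=
  forall eps, 0 < eps -> exists delta, 0 < delta /\
    forall y, D y -> Rabs (y - x) < delta -> Rabs (f y - f x) < eps.

Definition Ck_on (a b : R) (k : nat) (f : R -> R) (d : nat -> R -> R) : Prop :=
  (forall x, Icc a b x -> d O x = f x) /\
  (forall i x, (i < k)%nat -> Icc a b x -> deriv_within (Icc a b) (d i) x (d (S i) x)) /\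
  (forall i x, (i <= k)%nat -> Icc a b x -> cont_within (Icc a b) (d i) x).

Definition diff2_within (D : R -> R -> Prop) (F : R -> R -> R) (x t a b : R) : Prop :=
  forall eps, 0 < eps -> exists delta, 0 < delta /\
    forall y s, D y s -> Rabs (y - x) < delta -> Rabs (s - t) < delta ->
      Rabs (F y s - F x t - a * (y - x) - b * (s - t))
        <= eps * (Rabs (y - x) + Rabs (s - t)).

Definition cont2_within (D : R -> R -> Prop) (F : R -> R -> R) (x t : R) : Prop :=
  forall eps, 0 < eps -> exists delta, 0 < delta /\
    forall y s, D y s -> Rabs (y - x) < delta -> Rabs (s - t) < delta ->
      Rabs (F y s - F x t) < eps.

Definition C1_on2 (D : R -> R -> Prop) (F Fx Ft : R -> R -> R) : Prop :=
  forall x t, D x t ->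
    diff2_within D F x t (Fx x t) (Ft x t) /\
    cont2_within D F x t /\ cont2_within D Fx x t /\ cont2_within D Ft x t.

Definition Dtilde (x1 x2 delta : R) (x t : R) : Prop :=
  0 <= t <= delta /\ x1 + 2/3 * t ^ 3 <= x <= x2 - 2/3 * t ^ 3.

(* Main.v *)
Require Import Defs.
From Stdlib Require Import Reals Lra Lia FunctionalExtensionality.
From Coquelicot Require Import Coquelicot.
Open Scope R_scope.

Ltac rring := match goal with |- @eq _ ?a ?b => change (@eq R a b) end; cbv beta; ring.

Definition approx (f : R -> R) (x l : R) : Prop :=
  forall eps, 0 < eps -> exists d, 0 < d /\
    forall y, Rabs (y - x) < d -> Rabs (f y - f x - l * (y - x)) <= eps * Rabs (y - x).

Lemma approx_derive f x l : approx f x l -> is_derive f x l.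
Proof.
  intros H. apply is_derive_Reals. intros eps He.
  destruct (H (eps/2)) as [d [Hd Hy]]; [lra|].
  exists (mkposreal d Hd). intros h Hh Hhd. simpl in Hhd.
  specialize (Hy (x+h)). replace (x+h-x) with h in Hy by ring.
  specialize (Hy Hhd).
  replace ((f (x + h) - f x) / h - l) with ((f (x+h) - f x - l*h)/h) by (field; auto).
  rewrite Rabs_div by auto.
  apply Rle_lt_trans with (eps/2).
  - apply Rmult_le_reg_r with (Rabs h). apply Rabs_pos_lt; auto.
    unfold Rdiv. rewrite Rmult_assoc, Rinv_l. lra. apply Rabs_no_R0; auto.
  - lra.
Qed.

Lemma derive_approx f x l : is_derive f x l -> approx f x l.
Proof.
  intros H. apply is_derive_Reals in H. intros eps He.
  destruct (H eps He) as [d Hd]. exists d. split; [apply cond_pos|].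
  intros y Hy. destruct (Req_dec y x) as [->|Hne].
  - replace (x-x) with 0 by ring. rewrite Rabs_R0. replace (f x - f x - l*0) with 0 by ring.
    rewrite Rabs_R0; lra.
  - specialize (Hd (y-x)). replace (x + (y-x)) with y in Hd by ring.
    assert (Hn: y - x <> 0) by lra. specialize (Hd Hn Hy).
    replace (f y - f x - l*(y-x)) with (((f y - f x)/(y-x) - l) * (y-x)) by (field; auto).
    rewrite Rabs_mult. apply Rmult_le_compat_r. apply Rabs_pos. lra.
Qed.

Lemma cont_eps (f : R -> R) x :
  (forall eps, 0 < eps -> exists d, 0 < d /\ forall y, Rabs (y - x) < d -> Rabs (f y - f x) < eps) ->
  continuous f x.
Proof.
  intros H. apply continuity_pt_filterlim. intros eps He.
  destruct (H eps He) as [d [Hd Hy]]. exists d. split; auto.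
  intros y [_ Hy']. apply Hy. exact Hy'.
Qed.

Lemma cont_eps_inv (f : R -> R) x : continuous f x ->
  forall eps, 0 < eps -> exists d, 0 < d /\ forall y, Rabs (y - x) < d -> Rabs (f y - f x) < eps.
Proof.
  intros H. apply continuity_pt_filterlim in H. intros eps He.
  destruct (H eps He) as [d [Hd Hy]]. exists d. split; auto.
  intros y Hy'. destruct (Req_dec y x) as [->|Hne].
  - replace (f x - f x) with 0 by ring. rewrite Rabs_R0; lra.
  - apply Hy. split; [split; [exact I|auto]|exact Hy'].
Qed.

Lemma is_derive_cont_pt f x l : is_derive f x l -> continuity_pt f x.
Proof. intros H. apply continuity_pt_filterlim. apply (ex_derive_continuous (K:=R_AbsRing) (V:=R_NormedModule)). exists l; exact H. Qed.

Lemma diff_partials (f fx ft : R -> R -> R) x t :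
  (forall u v, is_derive (fun z => f z v) u (fx u v)) ->
  is_derive (fun z => f x z) t (ft x t) ->
  continuity_2d_pt fx x t ->
  differentiable_pt_lim f x t (fx x t) (ft x t).
Proof.
  intros Hx Ht Hc eps.
  destruct (Hc (pos_div_2 eps)) as [d1 Hd1].
  destruct (derive_approx _ _ _ Ht (eps/2)) as [d2 [Hd2 H2]].
  { destruct eps; simpl; lra. }
  assert (Hm: 0 < Rmin d1 d2) by (apply Rmin_pos; [apply cond_pos|lra]).
  exists (mkposreal _ Hm). intros u v Hu Hv. simpl in Hu, Hv.
  destruct (MVT_gen (fun z => f z v) x u (fun z => fx z v)) as [c [Hc1 Hc2]].
  { intros; apply Hx. }
  { intros; eapply is_derive_cont_pt; apply Hx. }
  assert (Hcx: Rabs (c - x) <= Rabs (u - x)).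
  { unfold Rmin, Rmax in Hc1. destruct (Rle_dec x u); unfold Rabs; 
    destruct (Rcase_abs (c-x)); destruct (Rcase_abs (u-x)); lra. }
  assert (Hf1: Rabs (fx c v - fx x t) < eps/2).
  { apply (Hd1 c v).
    - apply Rle_lt_trans with (Rabs (u-x)); auto. apply Rlt_le_trans with (Rmin d1 d2); auto. apply Rmin_l.
    - apply Rlt_le_trans with (Rmin d1 d2); auto. apply Rmin_l. }
  assert (Hf2 := H2 v (Rlt_le_trans _ _ _ Hv (Rmin_r _ _))).
  replace (f u v - f x t - (fx x t * (u - x) + ft x t * (v - t)))
    with ((fx c v - fx x t) * (u - x) + (f x v - f x t - ft x t * (v - t))) by lra.
  eapply Rle_trans. apply Rabs_triang. rewrite Rabs_mult.
  assert (Rabs (u-x) <= Rmax (Rabs (u - x)) (Rabs (v - t))) by apply Rmax_l.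
  assert (Rabs (v-t) <= Rmax (Rabs (u - x)) (Rabs (v - t))) by apply Rmax_r.
  assert (0 <= Rabs (u-x)) by apply Rabs_pos.
  assert (Rabs (fx c v - fx x t) * Rabs (u - x) <= eps/2 * Rabs (u-x)) by (apply Rmult_le_compat_r; lra).
  destruct eps as [e He]; simpl in *. nra.
Qed.

Lemma diff_to_within (D : R -> R -> Prop) F x t a b :
  differentiable_pt_lim F x t a b -> diff2_within D F x t a b.
Proof.
  intros H eps He. destruct (H (mkposreal eps He)) as [d Hd].
  exists d. split; [apply cond_pos|]. intros y s _ Hy Hs.
  specialize (Hd y s Hy Hs). simpl in Hd.
  replace (F y s - F x t - a * (y - x) - b * (s - t)) with (F y s - F x t - (a * (y - x) + b * (s - t))) by ring.
  eapply Rle_trans; [exact Hd|]. apply Rmult_le_compat_l; [lra|].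
  unfold Rmax; destruct (Rle_dec _ _); generalize (Rabs_pos (y-x)) (Rabs_pos (s-t)); lra.
Qed.

Lemma cont_to_within (D : R -> R -> Prop) F x t :
  continuity_2d_pt F x t -> cont2_within D F x t.
Proof.
  intros H eps He. destruct (H (mkposreal eps He)) as [d Hd].
  exists d. split; [apply cond_pos|]. intros y s _ Hy Hs. apply Hd; auto.
Qed.

Lemma C1_from (D : R -> R -> Prop) (F Fx Ft : R -> R -> R) :
  (forall u v, is_derive (fun z => F z v) u (Fx u v)) ->
  (forall u v, is_derive (fun z => F u z) v (Ft u v)) ->
  (forall u v, continuity_2d_pt Fx u v) ->
  (forall u v, continuity_2d_pt Ft u v) ->
  C1_on2 D F Fx Ft.
Proof.
  intros H1 H2 H3 H4 x t _.
  assert (Hd := diff_partials F Fx Ft x t H1 (H2 x t) (H3 x t)).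
  split; [apply diff_to_within; auto|].
  split; [apply cont_to_within; apply differentiable_continuity_pt; exists (Fx x t), (Ft x t); auto|].
  split; apply cont_to_within; auto.
Qed.

Definition pw (g z : R) : R := if Rlt_dec 0 z then Rpower z g else 0.

Lemma loc_pos z : 0 < z -> locally z (fun y => 0 < y).
Proof.
  intros H. exists (mkposreal z H). intros y Hy.
  unfold ball in Hy; simpl in Hy; unfold AbsRing_ball, abs, minus, plus, opp in Hy; simpl in Hy.
  apply Rabs_def2 in Hy. lra.
Qed.

Lemma loc_neg z : z < 0 -> locally z (fun y => y < 0).
Proof.
  intros H. assert (H' : 0 < -z) by lra. exists (mkposreal (-z) H'). intros y Hy.
  unfold ball in Hy; simpl in Hy; unfold AbsRing_ball, abs, minus, plus, opp in Hy; simpl in Hy.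
  apply Rabs_def2 in Hy. lra.
Qed.

Lemma pw_pos_eq g z : 0 < z -> pw g z = Rpower z g.
Proof. intros H; unfold pw; destruct (Rlt_dec 0 z); [auto|lra]. Qed.
Lemma pw_npos_eq g z : z <= 0 -> pw g z = 0.
Proof. intros H; unfold pw; destruct (Rlt_dec 0 z); [lra|auto]. Qed.

Lemma pw_small g : 0 < g -> forall eps, 0 < eps -> exists d, 0 < d /\
  forall y, Rabs y < d -> Rabs (pw g y) < eps.
Proof.
  intros Hg eps He. exists (Rpower eps (/g)). split. apply exp_pos.
  intros y Hy. destruct (Rlt_dec 0 y) as [Hp|Hn].
  - rewrite pw_pos_eq by auto. rewrite Rabs_pos_eq by (left; apply exp_pos).
    rewrite Rabs_pos_eq in Hy by lra.
    replace eps with (Rpower (Rpower eps (/g)) g).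
    apply Rlt_Rpower_l; auto.
    rewrite Rpower_mult. rewrite Rinv_l by lra. apply Rpower_1; auto.
  - rewrite pw_npos_eq by lra. rewrite Rabs_R0; auto.
Qed.

Lemma pw_derive_pos g z : 0 < z -> is_derive (pw g) z (g * Rpower z (g - 1)).
Proof.
  intros H. apply is_derive_ext_loc with (fun y => Rpower y g).
  - apply filter_imp with (fun y => 0 < y); [|apply loc_pos; auto].
    intros y Hy. rewrite pw_pos_eq; auto.
  - apply is_derive_Reals. apply derivable_pt_lim_power; auto.
Qed.

Lemma pw_cont g z : 0 < g -> continuous (pw g) z.
Proof.
  intros Hg. destruct (Rtotal_order z 0) as [Hn|[H0|Hp]].
  - apply continuous_ext_loc with (fun _ => 0).
    + apply filter_imp with (fun y => y < 0); [|apply loc_neg; auto].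
      intros y Hy. rewrite pw_npos_eq; lra.
    + apply continuous_const.
  - subst z. apply cont_eps. intros eps He. destruct (pw_small g Hg eps He) as [d [Hd Hy]].
    exists d; split; auto. intros y Hy'. rewrite (pw_npos_eq g 0) by lra.
    replace (pw g y - 0) with (pw g y) by ring. apply Hy. replace (y - 0) with y in Hy' by ring. auto.
  - apply (ex_derive_continuous (K:=R_AbsRing) (V:=R_NormedModule)).
    eexists; apply pw_derive_pos; auto.
Qed.

Lemma q_derive g z : 0 < g -> is_derive (fun y => y * pw g y) z ((1 + g) * pw g z).
Proof.
  intros Hg. destruct (Rtotal_order z 0) as [Hn|[H0|Hp]].
  - apply is_derive_ext_loc with (fun _ => 0).
    + apply filter_imp with (fun y => y < 0); [|apply loc_neg; auto].
      intros y Hy. rewrite pw_npos_eq; lra.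
    + rewrite pw_npos_eq by lra. replace ((1+g)*0) with 0 by ring. apply is_derive_Reals, derivable_pt_lim_const.
  - subst z. apply approx_derive. intros eps He. destruct (pw_small g Hg eps He) as [d [Hd Hy]].
    exists d; split; auto. intros y Hy'. rewrite (pw_npos_eq g 0) by lra.
    replace (y - 0) with y in * by ring.
    replace (y * pw g y - 0 * 0 - (1 + g) * 0 * y) with (y * pw g y) by ring.
    rewrite Rabs_mult. rewrite Rmult_comm. apply Rmult_le_compat_r. apply Rabs_pos. left; auto.
  - eapply is_derive_ext. intros; reflexivity.
    replace ((1 + g) * pw g z) with (1 * pw g z + z * (g * Rpower z (g - 1))).
    + apply (is_derive_mult (fun y => y) (pw g)). apply is_derive_Reals, derivable_pt_lim_id. apply pw_derive_pos; auto.
      intros; apply Rmult_comm.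
    + rewrite pw_pos_eq by auto.
      replace (z * (g * Rpower z (g-1))) with (g * (Rpower z 1 * Rpower z (g-1))) by (rewrite Rpower_1; auto; ring).
      rewrite <- Rpower_plus. replace (1 + (g-1)) with g by ring. ring.
Qed.

Lemma der_mult (f g : R -> R) x df dg : is_derive f x df -> is_derive g x dg ->
  is_derive (fun y => f y * g y) x (df * g x + f x * dg).
Proof. rewrite !is_derive_Reals. intros; apply derivable_pt_lim_mult; auto. Qed.
Lemma der_plus (f g : R -> R) x df dg : is_derive f x df -> is_derive g x dg ->
  is_derive (fun y => f y + g y) x (df + dg).
Proof. rewrite !is_derive_Reals. intros; apply derivable_pt_lim_plus; auto. Qed.
Lemma der_minus (f g : R -> R) x df dg : is_derive f x df -> is_derive g x dg ->
  is_derive (fun y => f y - g y) x (df - dg).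
Proof. rewrite !is_derive_Reals. intros; apply derivable_pt_lim_minus; auto. Qed.
Lemma der_const (c x : R) : is_derive (fun _ => c) x 0.
Proof. apply is_derive_Reals, derivable_pt_lim_const. Qed.
Lemma der_id (x : R) : is_derive (fun y => y) x 1.
Proof. apply is_derive_Reals, derivable_pt_lim_id. Qed.
Lemma der_comp (f g : R -> R) x df dg : is_derive f (g x) df -> is_derive g x dg ->
  is_derive (fun y => f (g y)) x (df * dg).
Proof. rewrite !is_derive_Reals. intros. apply (derivable_pt_lim_comp g f); auto. Qed.
Lemma der_eq (f : R -> R) x l l' : is_derive f x l -> l = l' -> is_derive f x l'.
Proof. intros H ->; auto. Qed.
Lemma der_ext (f g : R -> R) x l : (forall y, f y = g y) -> is_derive f x l -> is_derive g x l.
Proof. intros E H. eapply is_derive_ext; eauto. Qed.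
Lemma der_pow (x : R) n : is_derive (fun y => y ^ n) x (INR n * x ^ Nat.pred n).
Proof. apply is_derive_Reals, derivable_pt_lim_pow. Qed.

Lemma cont_mult (f g : R -> R) x : continuous f x -> continuous g x -> continuous (fun y => f y * g y) x.
Proof. intros; apply (continuous_mult (K:=R_AbsRing)); auto. Qed.
Lemma cont_plus (f g : R -> R) x : continuous f x -> continuous g x -> continuous (fun y => f y + g y) x.
Proof. intros; apply (continuous_plus (K:=R_AbsRing) (V:=R_NormedModule)); auto. Qed.
Lemma cont_comp (f g : R -> R) x : continuous g x -> continuous f (g x) -> continuous (fun y => f (g y)) x.
Proof. intros; apply (continuous_comp g f); auto. Qed.
Lemma cont_const (c x : R) : continuous (fun _ => c) x.
Proof. apply continuous_const. Qed.
Lemma cont_id (x : R) : continuous (fun y => y) x.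
Proof. apply continuous_id. Qed.
Lemma cont_der (f : R -> R) x l : is_derive f x l -> continuous f x.
Proof. intros H. apply (ex_derive_continuous (K:=R_AbsRing) (V:=R_NormedModule)). exists l; auto. Qed.

Definition Pk (g m : R) : R := pw g (1 - m * m).

Lemma Pk_cont g m : 0 < g -> continuous (Pk g) m.
Proof.
  intros Hg. unfold Pk. apply (cont_comp (pw g) (fun m => 1 - m*m)).
  - eapply cont_der. apply der_minus. apply der_const. apply der_mult; apply der_id.
  - apply pw_cont; auto.
Qed.

Lemma Q_derive (g m : R) : 0 < g ->
  is_derive (fun y => (1 - y*y) * Pk g y) m (- (2 + 2*g) * m * Pk g m).
Proof.
  intros Hg. unfold Pk.
  eapply der_eq. 
  { apply (der_comp (fun z => z * pw g z) (fun y => 1 - y*y)).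
    apply q_derive; auto. apply der_minus. apply der_const. apply der_mult; apply der_id. }
  rring.
Qed.

Lemma Pk_bound g m : 0 < g -> -1 <= m <= 1 -> 0 <= Pk g m <= 1.
Proof.
  intros Hg Hm. unfold Pk, pw. destruct (Rlt_dec 0 (1 - m*m)).
  - split. left; apply exp_pos.
    unfold Rpower. rewrite <- exp_0 at 2.
    assert (ln (1 - m*m) <= 0).
    { destruct (Req_dec (1 - m*m) 1) as [E|E]. rewrite E, ln_1; lra.
      left. rewrite <- ln_1. apply ln_increasing; auto. nra. }
    destruct (Req_dec (g * ln (1 - m*m)) 0) as [E|E]. rewrite E; lra.
    left. apply exp_increasing. nra.
  - lra.
Qed.

Lemma Pk_pos g m : -1 < m < 1 -> 0 < Pk g m.
Proof.
  intros Hm. unfold Pk, pw. destruct (Rlt_dec 0 (1 - m*m)). apply exp_pos. exfalso; nra.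
Qed.

Lemma Pk_int_pos g : 0 < g -> 0 < RInt (Pk g) (-1) 1.
Proof.
  intros Hg. apply RInt_gt_0. lra. intros; apply Pk_pos; auto.
  intros; apply Pk_cont; auto.
Qed.


Definition sg (t : R) : R := 2/3 * t^3.
Definition T (K h : R -> R) (x t : R) : R := RInt (fun m => h (x + sg t * m) * K m) (-1) 1.

Lemma RInt_sub (f g : R -> R) a b : ex_RInt f a b -> ex_RInt g a b ->
  RInt (fun m => f m - g m) a b = RInt f a b - RInt g a b.
Proof. intros. rewrite <- (RInt_minus f g); auto. Qed.
Lemma RInt_add (f g : R -> R) a b : ex_RInt f a b -> ex_RInt g a b ->
  RInt (fun m => f m + g m) a b = RInt f a b + RInt g a b.
Proof. intros. rewrite <- (RInt_plus f g); auto. Qed.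
Lemma RInt_cmul (f : R -> R) a b c : ex_RInt f a b ->
  RInt (fun m => c * f m) a b = c * RInt f a b.
Proof. intros. exact (RInt_scal f a b c H). Qed.

Lemma cpt (f : R -> R) x : continuous f x -> continuity_pt f x.
Proof. intros; apply continuity_pt_filterlim; auto. Qed.

Lemma cont_opp (f : R -> R) x : continuous f x -> continuous (fun y => - f y) x.
Proof.
  intros H. apply (continuous_ext (fun y => -1 * f y)). intros; rring.
  apply (cont_mult (fun _ => -1) f). apply cont_const. auto.
Qed.

Lemma absle a b : Rabs a <= b -> -b <= a <= b.
Proof. unfold Rabs; destruct (Rcase_abs a); intros; lra. Qed.
Lemma absle' a b : -b <= a <= b -> Rabs a <= b.
Proof. unfold Rabs; destruct (Rcase_abs a); intros; lra. Qed.

Lemma exRI (f : R -> R) : (forall m, continuous f m) -> ex_RInt f (-1) 1.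
Proof. intros H. apply (ex_RInt_continuous (V:=R_CompleteNormedModule)). intros; apply H. Qed.

Lemma cont_lin (h K : R -> R) x c : (forall z, continuous h z) -> (forall m, continuous K m) ->
  forall m, continuous (fun m => h (x + c * m) * K m) m.
Proof.
  intros Hh HK m. apply cont_mult; auto.
  apply (cont_comp h (fun m => x + c * m)); auto.
  apply cont_plus. apply cont_const. apply cont_mult. apply cont_const. apply cont_id.
Qed.

Lemma c2_lin (h : R -> R) (a : R -> R) u v : (forall z, continuous h z) ->
  (forall w, continuous a w) ->
  continuity_2d_pt (fun u v => h (u + a u * v)) u v.
Proof.
  intros Hh Ha. apply continuity_1d_2d_pt_comp. apply cpt; auto.
  apply continuity_2d_pt_plus. apply continuity_2d_pt_id1.
  apply continuity_2d_pt_mult. apply (continuity_1d_2d_pt_comp a (fun u v => u)). apply cpt; auto.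
  apply continuity_2d_pt_id1. apply continuity_2d_pt_id2.
Qed.

Lemma c2_snd (K : R -> R) u v : (forall m, continuous K m) -> continuity_2d_pt (fun _ v => K v) u v.
Proof. intros HK. apply (continuity_1d_2d_pt_comp K (fun u v => v)). apply cpt; auto. apply continuity_2d_pt_id2. Qed.

Lemma T_dx (K h h' : R -> R) x t :
  (forall z, is_derive h z (h' z)) -> (forall z, continuous h' z) -> (forall m, continuous K m) ->
  is_derive (fun z => T K h z t) x (T K h' x t).
Proof.
  intros Hd Hc HK. unfold T.
  assert (HD : forall u v, Derive (fun z => h (z + sg t * v) * K v) u = h' (u + sg t * v) * K v).
  { intros u v. apply is_derive_unique. eapply der_eq.
    apply (der_mult (fun z => h (z + sg t * v)) (fun _ => K v)).
    apply (der_comp h (fun z => z + sg t * v)). apply Hd. apply der_plus. apply der_id. apply der_const.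
    apply der_const. rring. }
  eapply der_eq.
  { apply (is_derive_RInt_param (fun u m => h (u + sg t * m) * K m)).
    - apply filter_forall. intros x0 m _. eexists. rewrite is_derive_Reals. apply is_derive_Reals.
      apply (der_mult (fun z => h (z + sg t * m)) (fun _ => K m)).
      apply (der_comp h (fun z => z + sg t * m)). apply Hd. apply der_plus. apply der_id. apply der_const.
      apply der_const.
    - intros m _. apply (continuity_2d_pt_ext (fun u v => h' (u + sg t * v) * K v)). intros; symmetry; apply HD.
      apply continuity_2d_pt_mult.
      apply (c2_lin h' (fun _ => sg t)); auto. intros; apply cont_const.
      apply c2_snd; auto.
    - apply filter_forall. intros y. apply exRI. apply cont_lin. intros; eapply cont_der; apply Hd. auto. }
  unfold T. apply RInt_ext. intros; rewrite HD; reflexivity.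
Qed.

Lemma sg_der u : is_derive sg u (2 * u^2).
Proof.
  unfold sg. eapply der_eq. apply is_derive_scal. apply der_pow. match goal with |- @eq _ ?a ?b => change (@eq R a b) end. simpl. field.
Qed.

Lemma sg_cont u : continuous sg u.
Proof. eapply cont_der; apply sg_der. Qed.

Lemma T_dt (K h h' : R -> R) x t :
  (forall z, is_derive h z (h' z)) -> (forall z, continuous h' z) -> (forall m, continuous K m) ->
  is_derive (fun z => T K h x z) t (2 * t^2 * T (fun m => m * K m) h' x t).
Proof.
  intros Hd Hc HK. unfold T.
  assert (HDe : forall u v, is_derive (fun z => h (x + sg z * v) * K v) u (2*u^2 * (h' (x + sg u * v) * (v * K v)))).
  { intros u v. eapply der_eq.
    apply (der_mult (fun z => h (x + sg z * v)) (fun _ => K v)).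
    apply (der_comp h (fun z => x + sg z * v)). apply Hd. apply der_plus. apply der_const.
    apply (der_mult sg (fun _ => v)). apply sg_der. apply der_const.
    apply der_const. rring. }
  assert (HD : forall u v, Derive (fun z => h (x + sg z * v) * K v) u = 2*u^2 * (h' (x + sg u * v) * (v * K v))).
  { intros; apply is_derive_unique; apply HDe. }
  eapply der_eq.
  { apply (is_derive_RInt_param (fun u m => h (x + sg u * m) * K m)).
    - apply filter_forall. intros x0 m _. eexists. apply HDe.
    - intros m _. apply (continuity_2d_pt_ext (fun u v => 2*u^2 * (h' (x + sg u * v) * (v * K v)))).
      intros; symmetry; apply HD.
      apply continuity_2d_pt_mult. apply continuity_2d_pt_mult. apply continuity_2d_pt_const.
      apply (continuity_1d_2d_pt_comp (fun u => u^2) (fun u v => u)). apply cpt. eapply cont_der; apply der_pow.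
      apply continuity_2d_pt_id1.
      apply continuity_2d_pt_mult.
      apply continuity_1d_2d_pt_comp. apply cpt; auto.
      apply continuity_2d_pt_plus. apply continuity_2d_pt_const.
      apply continuity_2d_pt_mult. apply (continuity_1d_2d_pt_comp sg (fun u v => u)). apply cpt, sg_cont.
      apply continuity_2d_pt_id1. apply continuity_2d_pt_id2.
      apply continuity_2d_pt_mult. apply continuity_2d_pt_id2. apply c2_snd; auto.
    - apply filter_forall. intros y. apply exRI. apply cont_lin. intros; eapply cont_der; apply Hd. auto. }
  rewrite <- RInt_cmul. apply RInt_ext. intros; rewrite HD; reflexivity.
  apply exRI. intros m. apply cont_mult. apply (cont_comp h' (fun m => x + sg t * m)).
  apply cont_plus. apply cont_const. apply cont_mult. apply cont_const. apply cont_id. auto.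
  apply cont_mult. apply cont_id. auto.
Qed.

Lemma T_cont (K h : R -> R) x t :
  (forall z, continuous h z) -> (forall m, continuous K m) ->
  (forall m, -1 <= m <= 1 -> Rabs (K m) <= 1) ->
  continuity_2d_pt (T K h) x t.
Proof.
  intros Hh HK HKb eps.
  set (A := Rabs (sg t) + 2).
  assert (He4 : 0 < eps/4) by (destruct eps; simpl; lra).
  destruct (uniform_continuity_2d (fun u v => h u) (x - A) (x + A) 0 0) with (mkposreal _ He4) as [d Hd].
  { intros. apply (continuity_1d_2d_pt_comp h (fun u v => u)). apply cpt; auto. apply continuity_2d_pt_id1. }
  assert (Hd2pos : 0 < Rmin 1 (d/2)) by (apply Rmin_pos; [lra| destruct d; simpl; lra]).
  destruct (cont_eps_inv sg t (sg_cont t) _ Hd2pos) as [d2 [Hd2 Hsg]].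
  assert (Hpos : 0 < Rmin (Rmin 1 (d/2)) d2) by (apply Rmin_pos; lra).
  exists (mkposreal _ Hpos). intros y s Hy Hs. simpl in Hy, Hs.
  assert (Hy1 : Rabs (y - x) < 1) by (eapply Rlt_le_trans; [exact Hy|]; eapply Rle_trans; [apply Rmin_l|apply Rmin_l]).
  assert (Hy2 : Rabs (y - x) < d/2) by (eapply Rlt_le_trans; [exact Hy|]; eapply Rle_trans; [apply Rmin_l|apply Rmin_r]).
  assert (Hs2 : Rabs (s - t) < d2) by (eapply Rlt_le_trans; [exact Hs|]; apply Rmin_r).
  specialize (Hsg s Hs2).
  assert (Hsg1 : Rabs (sg s - sg t) < 1) by (eapply Rlt_le_trans; [exact Hsg|]; apply Rmin_l).
  assert (Hsg2 : Rabs (sg s - sg t) < d/2) by (eapply Rlt_le_trans; [exact Hsg|]; apply Rmin_r).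
  unfold T. rewrite <- RInt_sub by (apply exRI; apply cont_lin; auto).
  eapply Rle_lt_trans.
  apply abs_RInt_le_const with (M := eps/4). lra.
  apply exRI. intros m. apply (cont_plus _ (fun m => - (h (x + sg t * m) * K m))).
  apply cont_lin; auto. apply (cont_opp (fun m => h (x + sg t * m) * K m)).
  apply cont_lin; auto.
  2: { destruct eps; simpl; lra. }
  intros m Hm.
  replace (h (y + sg s * m) * K m - h (x + sg t * m) * K m) with ((h (y + sg s * m) - h (x + sg t * m)) * K m) by ring.
  rewrite Rabs_mult.
  assert (HK1 := HKb m Hm).
  assert (Hmabs : Rabs m <= 1) by (apply Rabs_le; lra).
  assert (E1 : Rabs (sg s * m - sg t * m) <= Rabs (sg s - sg t)).
  { replace (sg s * m - sg t * m) with ((sg s - sg t) * m) by ring. rewrite Rabs_mult.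
    generalize (Rabs_pos (sg s - sg t)); nra. }
  assert (E2 : Rabs (sg t * m) <= Rabs (sg t)).
  { rewrite Rabs_mult. generalize (Rabs_pos (sg t)); nra. }
  assert (E3 : Rabs (sg s * m) <= Rabs (sg t) + 1).
  { replace (sg s * m) with ((sg s * m - sg t * m) + sg t * m) by ring.
    eapply Rle_trans. apply Rabs_triang. lra. }
  assert (Hb : Rabs (h (y + sg s * m) - h (x + sg t * m)) < eps/4).
  { apply (Hd (x + sg t * m) 0 (y + sg s * m) 0).
    - apply absle in E2. apply absle in E3. generalize (Rabs_pos (sg t)); intros. unfold A. split; lra.
    - lra.
    - apply absle in E3. assert (Rabs (y - x) <= 1) by lra. apply absle in H.
      generalize (Rabs_pos (sg t)); intros. unfold A. split; lra.
    - lra.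
    - replace (y + sg s * m - (x + sg t * m)) with ((y - x) + (sg s * m - sg t * m)) by ring.
      eapply Rle_lt_trans. apply Rabs_triang. destruct d; simpl in *; lra.
    - replace (0-0) with 0 by ring. rewrite Rabs_R0. apply cond_pos. }
  generalize (Rabs_pos (K m)) (Rabs_pos (h (y + sg s * m) - h (x + sg t * m))). nra.
Qed.


Lemma T_ibp (g : R) (h h' : R -> R) x t : 0 < g ->
  (forall z, is_derive h z (h' z)) -> (forall z, continuous h' z) ->
  sg t * (T (Pk g) h' x t - T (fun m => m * (m * Pk g m)) h' x t)
   = (2 + 2*g) * T (fun m => m * Pk g m) h x t.
Proof.
  intros Hg Hd Hc. set (s := sg t).
  assert (Hh : forall z, continuous h z) by (intros; eapply cont_der; apply Hd).
  assert (HP : forall m, continuous (Pk g) m) by (intros; apply Pk_cont; auto).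
  assert (HK1 : forall m, continuous (fun m => m * Pk g m) m) by (intros; apply cont_mult; auto; apply cont_id).
  assert (HK2 : forall m, continuous (fun m => m * (m * Pk g m)) m) by (intros; apply cont_mult; auto; apply cont_id).
  assert (HI : is_RInt (fun m => s * (h' (x + s*m) * Pk g m - h' (x + s*m) * (m * (m * Pk g m)))
                                - (2+2*g) * (h (x + s*m) * (m * Pk g m))) (-1) 1
                 (minus ((fun m => h (x + s*m) * ((1 - m*m) * Pk g m)) 1)
                        ((fun m => h (x + s*m) * ((1 - m*m) * Pk g m)) (-1)))).
  { apply (is_RInt_derive (V:=R_CompleteNormedModule) (fun m => h (x + s*m) * ((1 - m*m) * Pk g m))).
    - intros m _. eapply der_eq.
      apply (der_mult (fun m => h (x + s*m)) (fun m => (1 - m*m) * Pk g m)).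
      apply (der_comp h (fun m => x + s*m)). apply Hd. apply der_plus. apply der_const.
      apply (der_mult (fun _ => s) (fun m => m)). apply der_const. apply der_id.
      apply Q_derive; auto. rring.
    - intros m _. apply (cont_plus _ (fun m => - ((2+2*g) * (h (x + s*m) * (m * Pk g m))))).
      apply (cont_mult (fun _ => s)). apply cont_const.
      apply (cont_plus _ (fun m => - (h' (x + s*m) * (m * (m * Pk g m))))).
      apply cont_lin; auto. apply cont_opp. apply cont_lin; auto.
      apply cont_opp. apply (cont_mult (fun _ => 2+2*g)). apply cont_const. apply cont_lin; auto. }
  apply (is_RInt_unique (V:=R_CompleteNormedModule)) in HI.
  replace (minus _ _) with 0 in HI by (unfold minus, plus, opp; simpl; ring).
  unfold T. fold s.
  assert (E1: ex_RInt (fun m => h' (x + s * m) * Pk g m - h' (x + s * m) * (m * (m * Pk g m))) (-1) 1).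
  { apply exRI. intros m. apply (cont_plus _ (fun m => - (h' (x + s*m) * (m * (m * Pk g m))))).
    apply cont_lin; auto. apply cont_opp. apply cont_lin; auto. }
  assert (E2: ex_RInt (fun m => s * (h' (x + s * m) * Pk g m - h' (x + s * m) * (m * (m * Pk g m)))) (-1) 1).
  { apply exRI. intros m; apply (cont_mult (fun _ => s)). apply cont_const.
    apply (cont_plus _ (fun m => - (h' (x + s*m) * (m * (m * Pk g m))))).
    apply cont_lin; auto. apply cont_opp. apply cont_lin; auto. }
  assert (E3: ex_RInt (fun m => (2 + 2 * g) * (h (x + s * m) * (m * Pk g m))) (-1) 1).
  { apply exRI. intros m. apply (cont_mult (fun _ => 2+2*g)). apply cont_const. apply cont_lin; auto. }
  rewrite RInt_sub in HI by auto.
  rewrite (RInt_cmul (fun m => h' (x + s * m) * Pk g m - h' (x + s * m) * (m * (m * Pk g m)))) in HI by auto.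
  rewrite (RInt_cmul (fun m => h (x + s * m) * (m * Pk g m))) in HI by (apply exRI; apply cont_lin; auto).
  rewrite RInt_sub in HI by (apply exRI; apply cont_lin; auto).
  lra.
Qed.

Lemma T_zero (K h : R -> R) x : (forall m, continuous K m) ->
  T K h x 0 = h x * RInt K (-1) 1.
Proof.
  intros HK. unfold T. rewrite <- RInt_cmul.
  apply RInt_ext. intros m _. unfold sg. f_equal. f_equal. ring.
  apply exRI; auto.
Qed.


Fixpoint tay (m : nat) (c : nat -> R) (z : R) : R :=
  match m with
  | O => c O
  | S m' => c O + RInt (fun w => tay m' (fun j => c (S j)) w) 0 z
  end.

Lemma tay_der_aux m c z : (forall c' w, continuous (tay m c') w) ->
  is_derive (tay (S m) c) z (tay m (fun j => c (S j)) z).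
Proof.
  intros Hc. simpl. eapply der_eq.
  { apply der_plus. apply der_const.
    apply (is_derive_RInt (V:=R_NormedModule) (fun w => tay m (fun j => c (S j)) w)
             (fun z => RInt (fun w => tay m (fun j => c (S j)) w) 0 z) 0).
    apply filter_forall. intros b0.
    apply (RInt_correct (V:=R_CompleteNormedModule)).
    apply (ex_RInt_continuous (V:=R_CompleteNormedModule)). intros; apply Hc.
    apply Hc. }
  rring.
Qed.

Lemma tay_cont m : forall c w, continuous (tay m c) w.
Proof.
  induction m; intros c w.
  - simpl. apply cont_const.
  - eapply cont_der. apply tay_der_aux. auto.
Qed.

Lemma tay_der m c z : is_derive (tay (S m) c) z (tay m (fun j => c (S j)) z).
Proof. apply tay_der_aux. apply tay_cont. Qed.

Lemma tay_0 m c : tay m c 0 = c O.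
Proof.
  destruct m; simpl; auto. rewrite (RInt_point (V:=R_CompleteNormedModule)). simpl. 
  change (c O + 0 = c O). ring.
Qed.

Definition ext (d : nat -> R -> R) (a b : R) (n i : nat) (x : R) : R :=
  if Rlt_dec x a then tay (n - i) (fun j => d (i + j)%nat a) (x - a)
  else if Rlt_dec b x then tay (n - i) (fun j => d (i + j)%nat b) (x - b)
  else d i x.

Lemma ext_in d a b n i x : a <= x <= b -> ext d a b n i x = d i x.
Proof. intros H. unfold ext. destruct (Rlt_dec x a); [lra|]. destruct (Rlt_dec b x); [lra|auto]. Qed.
Lemma ext_lt d a b n i x : x < a -> ext d a b n i x = tay (n - i) (fun j => d (i + j)%nat a) (x - a).
Proof. intros H. unfold ext. destruct (Rlt_dec x a); [auto|lra]. Qed.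
Lemma ext_gt d a b n i x : a < b -> b < x -> ext d a b n i x = tay (n - i) (fun j => d (i + j)%nat b) (x - b).
Proof. intros H H'. unfold ext. destruct (Rlt_dec x a); [lra|]. destruct (Rlt_dec b x); [auto|lra]. Qed.

Lemma loc_lt x a : x < a -> locally x (fun y => y < a).
Proof.
  intros H. assert (H' : 0 < a - x) by lra. exists (mkposreal _ H'). intros y Hy.
  unfold ball in Hy; simpl in Hy; unfold AbsRing_ball, abs, minus, plus, opp in Hy; simpl in Hy.
  apply Rabs_def2 in Hy. lra.
Qed.
Lemma loc_gt x a : a < x -> locally x (fun y => a < y).
Proof.
  intros H. assert (H' : 0 < x - a) by lra. exists (mkposreal _ H'). intros y Hy.
  unfold ball in Hy; simpl in Hy; unfold AbsRing_ball, abs, minus, plus, opp in Hy; simpl in Hy.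
  apply Rabs_def2 in Hy. lra.
Qed.

Lemma tay_shift (d : nat -> R -> R) (i k : nat) a w :
  tay k (fun j => d (i + S j)%nat a) w = tay k (fun j => d (S i + j)%nat a) w.
Proof.
  replace (fun j => d (i + S j)%nat a) with (fun j => d (S i + j)%nat a); auto.
  apply functional_extensionality; intros j; f_equal; lia.
Qed.

Lemma poly_der (d : nat -> R -> R) (n i : nat) a x : (i < n)%nat ->
  is_derive (fun y => tay (n - i) (fun j => d (i + j)%nat a) (y - a)) x
            (tay (n - S i) (fun j => d (S i + j)%nat a) (x - a)).
Proof.
  intros Hi. destruct (n - i)%nat eqn:E; [lia|].
  replace (n - S i)%nat with n0 by lia.
  eapply der_eq.
  { apply (der_comp (tay (S n0) (fun j => d (i + j)%nat a)) (fun y => y - a)).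
    apply tay_der. apply der_minus. apply der_id. apply der_const. }
  change (tay n0 (fun j : nat => d (i + S j)%nat a) (x - a) * (1 - 0) = tay n0 (fun j : nat => d (S i + j)%nat a) (x - a)).
  rewrite tay_shift. ring.
Qed.

Lemma poly_approx (d : nat -> R -> R) (n i : nat) a : (i < n)%nat ->
  forall eps, 0 < eps -> exists del, 0 < del /\ forall y, Rabs (y - a) < del ->
   Rabs (tay (n - i) (fun j => d (i + j)%nat a) (y - a) - d i a - d (S i) a * (y - a)) <= eps * Rabs (y - a).
Proof.
  intros Hi eps He.
  destruct (derive_approx _ _ _ (poly_der d n i a a Hi) eps He) as [del [Hd H]].
  exists del; split; auto. intros y Hy. specialize (H y Hy).
  replace (a - a) with 0 in H by ring. rewrite !tay_0 in H.
  rewrite Nat.add_0_r in H. rewrite Nat.add_0_r in H. exact H.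
Qed.

Lemma ext_der a b n f d i x : a < b -> Ck_on a b n f d -> (i < n)%nat ->
  is_derive (ext d a b n i) x (ext d a b n (S i) x).
Proof.
  intros Hab [H0 [Hder Hcont]] Hi.
  destruct (Rlt_dec x a) as [Hxa|Hxa].
  { rewrite ext_lt by auto.
    apply is_derive_ext_loc with (fun y => tay (n - i) (fun j => d (i + j)%nat a) (y - a)).
    apply filter_imp with (fun y => y < a); [|apply loc_lt; auto].
    intros y Hy; rewrite ext_lt; auto. apply poly_der; auto. }
  destruct (Rlt_dec b x) as [Hbx|Hbx].
  { rewrite ext_gt by auto.
    apply is_derive_ext_loc with (fun y => tay (n - i) (fun j => d (i + j)%nat b) (y - b)).
    apply filter_imp with (fun y => b < y); [|apply loc_gt; auto].
    intros y Hy; rewrite ext_gt; auto. apply poly_der; auto. }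
  assert (Hx : a <= x <= b) by lra.
  rewrite ext_in by auto.
  apply approx_derive. intros eps He.
  destruct (Hder i x Hi Hx eps He) as [d0 [Hd0 H0']].
  destruct (Req_dec x a) as [Exa|Exa].
  { subst x. destruct (poly_approx d n i a Hi eps He) as [dL [HdL HL]].
    exists (Rmin d0 (Rmin dL (b - a))). split. apply Rmin_pos; auto. apply Rmin_pos; lra.
    intros y Hy. 
    assert (Hy0 : Rabs (y - a) < d0) by (eapply Rlt_le_trans; [exact Hy|apply Rmin_l]).
    assert (HyL : Rabs (y - a) < dL) by (eapply Rlt_le_trans; [exact Hy|]; eapply Rle_trans; [apply Rmin_r|apply Rmin_l]).
    assert (Hyb : Rabs (y - a) < b - a) by (eapply Rlt_le_trans; [exact Hy|]; eapply Rle_trans; [apply Rmin_r|apply Rmin_r]).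
    rewrite (ext_in d a b n i a) by lra.
    destruct (Rlt_dec y a) as [Hya|Hya].
    - rewrite ext_lt by auto. apply HL; auto.
    - apply Rabs_def2 in Hyb. rewrite ext_in by lra. apply H0'; auto. unfold Icc; lra. }
  destruct (Req_dec x b) as [Exb|Exb].
  { subst x. destruct (poly_approx d n i b Hi eps He) as [dL [HdL HL]].
    exists (Rmin d0 (Rmin dL (b - a))). split. apply Rmin_pos; auto. apply Rmin_pos; lra.
    intros y Hy. 
    assert (Hy0 : Rabs (y - b) < d0) by (eapply Rlt_le_trans; [exact Hy|apply Rmin_l]).
    assert (HyL : Rabs (y - b) < dL) by (eapply Rlt_le_trans; [exact Hy|]; eapply Rle_trans; [apply Rmin_r|apply Rmin_l]).
    assert (Hyb : Rabs (y - b) < b - a) by (eapply Rlt_le_trans; [exact Hy|]; eapply Rle_trans; [apply Rmin_r|apply Rmin_r]).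
    rewrite (ext_in d a b n i b) by lra.
    destruct (Rlt_dec b y) as [Hya|Hya].
    - rewrite ext_gt by auto. apply HL; auto.
    - apply Rabs_def2 in Hyb. rewrite ext_in by lra. apply H0'; auto. unfold Icc; lra. }
  exists (Rmin d0 (Rmin (x - a) (b - x))). split. apply Rmin_pos; auto. apply Rmin_pos; lra.
  intros y Hy.
  assert (Hy0 : Rabs (y - x) < d0) by (eapply Rlt_le_trans; [exact Hy|apply Rmin_l]).
  assert (Hy1 : Rabs (y - x) < x - a) by (eapply Rlt_le_trans; [exact Hy|]; eapply Rle_trans; [apply Rmin_r|apply Rmin_l]).
  assert (Hy2 : Rabs (y - x) < b - x) by (eapply Rlt_le_trans; [exact Hy|]; eapply Rle_trans; [apply Rmin_r|apply Rmin_r]).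
  apply Rabs_def2 in Hy1. apply Rabs_def2 in Hy2.
  rewrite !ext_in by lra. apply H0'; auto. unfold Icc; lra.
Qed.

Lemma ext_cont a b n f d i x : a < b -> Ck_on a b n f d -> (i <= n)%nat ->
  continuous (ext d a b n i) x.
Proof.
  intros Hab Hck Hi. destruct (Nat.lt_ge_cases i n) as [Hlt|Hge].
  { eapply cont_der. apply (ext_der a b n f d); eauto. }
  assert (i = n) by lia. subst i. destruct Hck as [H0 [Hder Hcont]].
  assert (En : (n - n = 0)%nat) by lia.
  destruct (Rlt_dec x a) as [Hxa|Hxa].
  { apply continuous_ext_loc with (fun _ => d n a).
    apply filter_imp with (fun y => y < a); [|apply loc_lt; auto].
    intros y Hy; rewrite ext_lt by auto. rewrite En. simpl. rewrite Nat.add_0_r. auto.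
    apply cont_const. }
  destruct (Rlt_dec b x) as [Hbx|Hbx].
  { apply continuous_ext_loc with (fun _ => d n b).
    apply filter_imp with (fun y => b < y); [|apply loc_gt; auto].
    intros y Hy; rewrite ext_gt by auto. rewrite En. simpl. rewrite Nat.add_0_r. auto.
    apply cont_const. }
  assert (Hx : a <= x <= b) by lra.
  apply cont_eps. intros eps He.
  destruct (Hcont n x (le_n n) Hx eps He) as [d0 [Hd0 H0']].
  exists d0. split; auto. intros y Hy. rewrite (ext_in d a b n n x) by auto.
  destruct (Rlt_dec y a) as [Hya|Hya].
  { rewrite ext_lt by auto. rewrite En. simpl. rewrite Nat.add_0_r.
    destruct (Req_dec x a) as [->|Hne].
    - replace (d n a - d n a) with 0 by ring. rewrite Rabs_R0; auto.
    - apply H0'. unfold Icc; lra. apply Rabs_def2 in Hy. apply Rabs_def1; lra. }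
  destruct (Rlt_dec b y) as [Hby|Hby].
  { rewrite ext_gt by auto. rewrite En. simpl. rewrite Nat.add_0_r.
    destruct (Req_dec x b) as [->|Hne].
    - replace (d n b - d n b) with 0 by ring. rewrite Rabs_R0; auto.
    - apply H0'. unfold Icc; lra. apply Rabs_def2 in Hy. apply Rabs_def1; lra. }
  rewrite ext_in by lra. apply H0'; auto. unfold Icc; lra.
Qed.


Definition KP1 : R -> R := Pk (1/6).
Definition KP2 : R -> R := Pk (5/6).
Definition cc1 : R := RInt KP1 (-1) 1.
Definition cc2 : R := RInt KP2 (-1) 1.
Definition sA (e0 : nat -> R -> R) (j : nat) (z : R) : R := (- / (2 * cc1)) * e0 j z.
Definition sB (e1 : nat -> R -> R) (j : nat) (z : R) : R := (/ (2 * cc2)) * e1 j z.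

Lemma c1_pos : 0 < cc1. Proof. apply Pk_int_pos; lra. Qed.
Lemma c2_pos : 0 < cc2. Proof. apply Pk_int_pos; lra. Qed.

Lemma KP1_c m : continuous KP1 m. Proof. apply Pk_cont; lra. Qed.
Lemma KP2_c m : continuous KP2 m. Proof. apply Pk_cont; lra. Qed.
Lemma K1_c m : continuous (fun m => m * KP1 m) m. Proof. apply cont_mult. apply cont_id. apply KP1_c. Qed.
Lemma K2_c m : continuous (fun m => m * KP2 m) m. Proof. apply cont_mult. apply cont_id. apply KP2_c. Qed.
Lemma M1_c m : continuous (fun m => m * (m * KP1 m)) m. Proof. apply cont_mult. apply cont_id. apply K1_c. Qed.
Lemma M2_c m : continuous (fun m => m * (m * KP2 m)) m. Proof. apply cont_mult. apply cont_id. apply K2_c. Qed.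

Lemma kb (g : R) (k : nat) m : 0 < g -> -1 <= m <= 1 -> Rabs (m ^ k * Pk g m) <= 1.
Proof.
  intros Hg Hm. rewrite Rabs_mult. rewrite <- RPow_abs.
  assert (Rabs m <= 1) by (apply absle'; lra).
  assert (Rabs m ^ k <= 1) by (rewrite <- (pow1 k); apply pow_incr; split; auto; apply Rabs_pos).
  destruct (Pk_bound g m Hg Hm). rewrite (Rabs_pos_eq (Pk g m)) by auto.
  assert (0 <= Rabs m ^ k) by (apply pow_le; apply Rabs_pos). nra.
Qed.

Lemma KP1_b m : -1 <= m <= 1 -> Rabs (KP1 m) <= 1.
Proof. intros H. generalize (kb (1/6) 0 m ltac:(lra) H). unfold KP1. simpl. rewrite Rmult_1_l. auto. Qed.
Lemma KP2_b m : -1 <= m <= 1 -> Rabs (KP2 m) <= 1.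
Proof. intros H. generalize (kb (5/6) 0 m ltac:(lra) H). unfold KP2. simpl. rewrite Rmult_1_l. auto. Qed.
Lemma K1_b m : -1 <= m <= 1 -> Rabs (m * KP1 m) <= 1.
Proof. intros H. generalize (kb (1/6) 1 m ltac:(lra) H). unfold KP1. simpl. rewrite Rmult_1_r. auto. Qed.
Lemma K2_b m : -1 <= m <= 1 -> Rabs (m * KP2 m) <= 1.
Proof. intros H. generalize (kb (5/6) 1 m ltac:(lra) H). unfold KP2. simpl. rewrite Rmult_1_r. auto. Qed.
Lemma M1_b m : -1 <= m <= 1 -> Rabs (m * (m * KP1 m)) <= 1.
Proof. intros H. generalize (kb (1/6) 2 m ltac:(lra) H). unfold KP1. simpl. rewrite Rmult_1_r, Rmult_assoc. auto. Qed.
Lemma M2_b m : -1 <= m <= 1 -> Rabs (m * (m * KP2 m)) <= 1.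
Proof. intros H. generalize (kb (5/6) 2 m ltac:(lra) H). unfold KP2. simpl. rewrite Rmult_1_r, Rmult_assoc. auto. Qed.

Lemma sA_der e0 (H1 : forall i z, (i < 4)%nat -> is_derive (e0 i) z (e0 (S i) z)) j z :
  (j < 4)%nat -> is_derive (sA e0 j) z (sA e0 (S j) z).
Proof. intros Hj. unfold sA. apply is_derive_scal. auto. Qed.
Lemma sA_cont e0 (H2 : forall i z, (i <= 4)%nat -> continuous (e0 i) z) j z :
  (j <= 4)%nat -> continuous (sA e0 j) z.
Proof. intros Hj. unfold sA. apply (cont_mult (fun _ => _) (e0 j)). apply cont_const. auto. Qed.
Lemma sB_der e1 (H1 : forall i z, (i < 3)%nat -> is_derive (e1 i) z (e1 (S i) z)) j z :
  (j < 3)%nat -> is_derive (sB e1 j) z (sB e1 (S j) z).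
Proof. intros Hj. unfold sB. apply is_derive_scal. auto. Qed.
Lemma sB_cont e1 (H2 : forall i z, (i <= 3)%nat -> continuous (e1 i) z) j z :
  (j <= 3)%nat -> continuous (sB e1 j) z.
Proof. intros Hj. unfold sB. apply (cont_mult (fun _ => _) (e1 j)). apply cont_const. auto. Qed.

Lemma TA_dx e0 (H1 : forall i z, (i < 4)%nat -> is_derive (e0 i) z (e0 (S i) z))
  (H2 : forall i z, (i <= 4)%nat -> continuous (e0 i) z) K j x t :
  (j < 4)%nat -> (forall m, continuous K m) ->
  is_derive (fun z => T K (sA e0 j) z t) x (T K (sA e0 (S j)) x t).
Proof. intros Hj HK. apply T_dx; auto. intros; apply sA_der; auto. intros; apply sA_cont; auto. Qed.
Lemma TA_dt e0 (H1 : forall i z, (i < 4)%nat -> is_derive (e0 i) z (e0 (S i) z))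
  (H2 : forall i z, (i <= 4)%nat -> continuous (e0 i) z) K j x t :
  (j < 4)%nat -> (forall m, continuous K m) ->
  is_derive (fun z => T K (sA e0 j) x z) t (2 * t^2 * T (fun m => m * K m) (sA e0 (S j)) x t).
Proof. intros Hj HK. apply T_dt; auto. intros; apply sA_der; auto. intros; apply sA_cont; auto. Qed.
Lemma TB_dx e1 (H1 : forall i z, (i < 3)%nat -> is_derive (e1 i) z (e1 (S i) z))
  (H2 : forall i z, (i <= 3)%nat -> continuous (e1 i) z) K j x t :
  (j < 3)%nat -> (forall m, continuous K m) ->
  is_derive (fun z => T K (sB e1 j) z t) x (T K (sB e1 (S j)) x t).
Proof. intros Hj HK. apply T_dx; auto. intros; apply sB_der; auto. intros; apply sB_cont; auto. Qed.
Lemma TB_dt e1 (H1 : forall i z, (i < 3)%nat -> is_derive (e1 i) z (e1 (S i) z))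
  (H2 : forall i z, (i <= 3)%nat -> continuous (e1 i) z) K j x t :
  (j < 3)%nat -> (forall m, continuous K m) ->
  is_derive (fun z => T K (sB e1 j) x z) t (2 * t^2 * T (fun m => m * K m) (sB e1 (S j)) x t).
Proof. intros Hj HK. apply T_dt; auto. intros; apply sB_der; auto. intros; apply sB_cont; auto. Qed.

Definition Uf e0 e1 x t := T KP1 (sA e0 1) x t + 1/2*t^3 * T (fun m => m * KP1 m) (sA e0 2) x t
  + t^2 * T KP2 (sB e1 1) x t + 1/4*t^5 * T (fun m => m * KP2 m) (sB e1 2) x t.
Definition Df e0 e1 x t := t^4 * T KP1 (sA e0 2) x t + 2 * T KP2 (sB e1 0) x t
  + 1/2*t^3 * T (fun m => m * KP2 m) (sB e1 1) x t + 1/2*t^6 * T KP2 (sB e1 2) x t.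
Definition uf e0 e1 x t := T KP1 (sA e0 0) x t + 1/2*t^3 * T (fun m => m * KP1 m) (sA e0 1) x t
  + t^2 * T KP2 (sB e1 0) x t + 1/4*t^5 * T (fun m => m * KP2 m) (sB e1 1) x t.
Definition Uxf e0 e1 x t := T KP1 (sA e0 2) x t + 1/2*t^3 * T (fun m => m * KP1 m) (sA e0 3) x t
  + t^2 * T KP2 (sB e1 2) x t + 1/4*t^5 * T (fun m => m * KP2 m) (sB e1 3) x t.
Definition Utf e0 e1 x t := 2*t^2 * T (fun m => m * KP1 m) (sA e0 2) x t
  + 3/2*t^2 * T (fun m => m * KP1 m) (sA e0 2) x t
  + 1/2*t^3 * (2*t^2 * T (fun m => m * (m * KP1 m)) (sA e0 3) x t)
  + 2*t * T KP2 (sB e1 1) x t + t^2 * (2*t^2 * T (fun m => m * KP2 m) (sB e1 2) x t)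
  + 5/4*t^4 * T (fun m => m * KP2 m) (sB e1 2) x t
  + 1/4*t^5 * (2*t^2 * T (fun m => m * (m * KP2 m)) (sB e1 3) x t).
Definition Dxf e0 e1 x t := t^4 * T KP1 (sA e0 3) x t + 2 * T KP2 (sB e1 1) x t
  + 1/2*t^3 * T (fun m => m * KP2 m) (sB e1 2) x t + 1/2*t^6 * T KP2 (sB e1 3) x t.
Definition Dtf e0 e1 x t := 4*t^3 * T KP1 (sA e0 2) x t + t^4 * (2*t^2 * T (fun m => m * KP1 m) (sA e0 3) x t)
  + 2 * (2*t^2 * T (fun m => m * KP2 m) (sB e1 1) x t) + 3/2*t^2 * T (fun m => m * KP2 m) (sB e1 1) x t
  + 1/2*t^3 * (2*t^2 * T (fun m => m * (m * KP2 m)) (sB e1 2) x t) + 3*t^5 * T KP2 (sB e1 2) x t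
  + 1/2*t^6 * (2*t^2 * T (fun m => m * KP2 m) (sB e1 3) x t).
Definition utf e0 e1 x t := 2*t^2 * T (fun m => m * KP1 m) (sA e0 1) x t
  + 3/2*t^2 * T (fun m => m * KP1 m) (sA e0 1) x t
  + 1/2*t^3 * (2*t^2 * T (fun m => m * (m * KP1 m)) (sA e0 2) x t)
  + 2*t * T KP2 (sB e1 0) x t + t^2 * (2*t^2 * T (fun m => m * KP2 m) (sB e1 1) x t)
  + 5/4*t^4 * T (fun m => m * KP2 m) (sB e1 1) x t
  + 1/4*t^5 * (2*t^2 * T (fun m => m * (m * KP2 m)) (sB e1 2) x t).

Definition Rf e0 e1 x t := Df e0 e1 x t - 2*t*Uf e0 e1 x t - e1 O x - t * e0 1%nat x.
Definition Sf e0 e1 x t := Df e0 e1 x t + 2*t*Uf e0 e1 x t - e1 O x + t * e0 1%nat x.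
Definition Wf e0 e1 x t := -2 * uf e0 e1 x t - e0 O x.
Definition Rx e0 e1 x t := Dxf e0 e1 x t - 2*t*Uxf e0 e1 x t - e1 1%nat x - t * e0 2%nat x.
Definition Rt e0 e1 x t := Dtf e0 e1 x t - (2*Uf e0 e1 x t + 2*t*Utf e0 e1 x t) - e0 1%nat x.
Definition Sx e0 e1 x t := Dxf e0 e1 x t + 2*t*Uxf e0 e1 x t - e1 1%nat x + t * e0 2%nat x.
Definition St e0 e1 x t := Dtf e0 e1 x t + (2*Uf e0 e1 x t + 2*t*Utf e0 e1 x t) + e0 1%nat x.
Definition Wx e0 e1 x t := -2 * Uf e0 e1 x t - e0 1%nat x.
Definition Wt e0 e1 x t := -2 * utf e0 e1 x t.

Lemma der_opp (f : R -> R) x l : is_derive f x l -> is_derive (fun y => - f y) x (- l).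
Proof. rewrite !is_derive_Reals. intros; apply derivable_pt_lim_opp; auto. Qed.

Ltac kc := first [apply KP1_c | apply KP2_c | apply K1_c | apply K2_c | apply M1_c | apply M2_c].
Ltac dstep e0 e1 H1 H2 H3 H4 := match goal with
  | |- is_derive (fun _ => ?c) _ _ => apply der_const
  | |- is_derive (fun z => z) _ _ => apply der_id
  | |- is_derive (fun z => z ^ _) _ _ => apply der_pow
  | |- is_derive (fun z => T _ (sA _ _) z _) _ _ => apply (TA_dx _ H1 H2); [lia|kc]
  | |- is_derive (fun z => T _ (sA _ _) _ z) _ _ => apply (TA_dt _ H1 H2); [lia|kc]
  | |- is_derive (fun z => T _ (sB _ _) z _) _ _ => apply (TB_dx _ H3 H4); [lia|kc]
  | |- is_derive (fun z => T _ (sB _ _) _ z) _ _ => apply (TB_dt _ H3 H4); [lia|kc]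
  | |- is_derive (fun z => e0 ?i z) _ _ => apply H1; lia
  | |- is_derive (fun z => e1 ?i z) _ _ => apply H3; lia
  | |- is_derive (fun z => @?f z + @?g z) _ _ => apply (der_plus f g)
  | |- is_derive (fun z => @?f z - @?g z) _ _ => apply (der_minus f g)
  | |- is_derive (fun z => @?f z * @?g z) _ _ => apply (der_mult f g)
  | |- is_derive (fun z => - @?f z) _ _ => apply (der_opp f)
  end.
Ltac fin := match goal with |- @eq _ ?a ?b => change (@eq R a b) end; cbv beta; cbn [Nat.pred];
  rewrite ?S_INR, ?INR_0; field.

Lemma Rf_dx (e0 e1 : nat -> R -> R) (H1 : forall i z, (i < 4)%nat -> is_derive (e0 i) z (e0 (S i) z))
  (H2 : forall i z, (i <= 4)%nat -> continuous (e0 i) z)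
  (H3 : forall i z, (i < 3)%nat -> is_derive (e1 i) z (e1 (S i) z))
  (H4 : forall i z, (i <= 3)%nat -> continuous (e1 i) z) u v :
  is_derive (fun z => Rf e0 e1 z v) u (Rx e0 e1 u v).
Proof.
  unfold Rf, Rx, Df, Uf, Dxf, Uxf. eapply der_eq. repeat dstep e0 e1 H1 H2 H3 H4. fin.
Qed.

Ltac hyps := intros e0 e1 H1 H2 H3 H4 u v.
Definition HYP (e0 e1 : nat -> R -> R) :=
  (forall i z, (i < 4)%nat -> is_derive (e0 i) z (e0 (S i) z)).

Lemma Rf_dt (e0 e1 : nat -> R -> R) (H1 : forall i z, (i < 4)%nat -> is_derive (e0 i) z (e0 (S i) z))
  (H2 : forall i z, (i <= 4)%nat -> continuous (e0 i) z)
  (H3 : forall i z, (i < 3)%nat -> is_derive (e1 i) z (e1 (S i) z))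
  (H4 : forall i z, (i <= 3)%nat -> continuous (e1 i) z) u v :
  is_derive (fun z => Rf e0 e1 u z) v (Rt e0 e1 u v).
Proof.
  unfold Rf, Rt, Df, Uf, Dtf, Utf. eapply der_eq. repeat dstep e0 e1 H1 H2 H3 H4. fin.
Qed.
Lemma Sf_dx (e0 e1 : nat -> R -> R) (H1 : forall i z, (i < 4)%nat -> is_derive (e0 i) z (e0 (S i) z))
  (H2 : forall i z, (i <= 4)%nat -> continuous (e0 i) z)
  (H3 : forall i z, (i < 3)%nat -> is_derive (e1 i) z (e1 (S i) z))
  (H4 : forall i z, (i <= 3)%nat -> continuous (e1 i) z) u v :
  is_derive (fun z => Sf e0 e1 z v) u (Sx e0 e1 u v).
Proof.
  unfold Sf, Sx, Df, Uf, Dxf, Uxf. eapply der_eq. repeat dstep e0 e1 H1 H2 H3 H4. fin.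
Qed.
Lemma Sf_dt (e0 e1 : nat -> R -> R) (H1 : forall i z, (i < 4)%nat -> is_derive (e0 i) z (e0 (S i) z))
  (H2 : forall i z, (i <= 4)%nat -> continuous (e0 i) z)
  (H3 : forall i z, (i < 3)%nat -> is_derive (e1 i) z (e1 (S i) z))
  (H4 : forall i z, (i <= 3)%nat -> continuous (e1 i) z) u v :
  is_derive (fun z => Sf e0 e1 u z) v (St e0 e1 u v).
Proof.
  unfold Sf, St, Df, Uf, Dtf, Utf. eapply der_eq. repeat dstep e0 e1 H1 H2 H3 H4. fin.
Qed.
Lemma Wf_dx (e0 e1 : nat -> R -> R) (H1 : forall i z, (i < 4)%nat -> is_derive (e0 i) z (e0 (S i) z))
  (H2 : forall i z, (i <= 4)%nat -> continuous (e0 i) z)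
  (H3 : forall i z, (i < 3)%nat -> is_derive (e1 i) z (e1 (S i) z))
  (H4 : forall i z, (i <= 3)%nat -> continuous (e1 i) z) u v :
  is_derive (fun z => Wf e0 e1 z v) u (Wx e0 e1 u v).
Proof.
  unfold Wf, Wx, uf, Uf. eapply der_eq. repeat dstep e0 e1 H1 H2 H3 H4. fin.
Qed.
Lemma Wf_dt (e0 e1 : nat -> R -> R) (H1 : forall i z, (i < 4)%nat -> is_derive (e0 i) z (e0 (S i) z))
  (H2 : forall i z, (i <= 4)%nat -> continuous (e0 i) z)
  (H3 : forall i z, (i < 3)%nat -> is_derive (e1 i) z (e1 (S i) z))
  (H4 : forall i z, (i <= 3)%nat -> continuous (e1 i) z) u v :
  is_derive (fun z => Wf e0 e1 u z) v (Wt e0 e1 u v).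
Proof.
  unfold Wf, Wt, uf, utf. eapply der_eq. repeat dstep e0 e1 H1 H2 H3 H4. fin.
Qed.

Ltac kbd := intros ? ?; first [apply KP1_b | apply KP2_b | apply K1_b | apply K2_b | apply M1_b | apply M2_b]; assumption.
Ltac cstep e0 e1 H2 H4 := match goal with
  | |- continuity_2d_pt (fun _ _ => ?c) _ _ => apply continuity_2d_pt_const
  | |- continuity_2d_pt (fun u v => u) _ _ => apply continuity_2d_pt_id1
  | |- continuity_2d_pt (fun u v => v) _ _ => apply continuity_2d_pt_id2
  | |- continuity_2d_pt (fun u v => v ^ ?n) _ _ =>
      apply (continuity_1d_2d_pt_comp (fun y => y ^ n) (fun u v => v));
      [apply cpt; eapply cont_der; apply der_pow | apply continuity_2d_pt_id2]
  | |- continuity_2d_pt (fun u v => T _ (sA _ _) u v) _ _ =>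
      apply T_cont; [intros; apply sA_cont; [auto|lia] | kc | kbd]
  | |- continuity_2d_pt (fun u v => T _ (sB _ _) u v) _ _ =>
      apply T_cont; [intros; apply sB_cont; [auto|lia] | kc | kbd]
  | |- continuity_2d_pt (fun u v => e0 ?i u) _ _ =>
      apply (continuity_1d_2d_pt_comp (e0 i) (fun u v => u));
      [apply cpt; apply H2; lia | apply continuity_2d_pt_id1]
  | |- continuity_2d_pt (fun u v => e1 ?i u) _ _ =>
      apply (continuity_1d_2d_pt_comp (e1 i) (fun u v => u));
      [apply cpt; apply H4; lia | apply continuity_2d_pt_id1]
  | |- continuity_2d_pt (fun u v => @?f u v + @?g u v) _ _ => apply (continuity_2d_pt_plus f g)
  | |- continuity_2d_pt (fun u v => @?f u v - @?g u v) _ _ => apply (continuity_2d_pt_minus f g)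
  | |- continuity_2d_pt (fun u v => @?f u v * @?g u v) _ _ => apply (continuity_2d_pt_mult f g)
  | |- continuity_2d_pt (fun u v => - @?f u v) _ _ => apply (continuity_2d_pt_opp f)
  end.

Lemma conts e0 e1
  (H2 : forall i z, (i <= 4)%nat -> continuous (e0 i) z)
  (H4 : forall i z, (i <= 3)%nat -> continuous (e1 i) z) u v :
  continuity_2d_pt (Rx e0 e1) u v /\ continuity_2d_pt (Rt e0 e1) u v /\
  continuity_2d_pt (Sx e0 e1) u v /\ continuity_2d_pt (St e0 e1) u v /\
  continuity_2d_pt (Wx e0 e1) u v /\ continuity_2d_pt (Wt e0 e1) u v.
Proof.
  unfold Rx, Rt, Sx, St, Wx, Wt, Dxf, Uxf, Dtf, Utf, Uf, utf.
  repeat split; repeat cstep e0 e1 H2 H4.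
Qed.

Lemma ibpA (e0 : nat -> R -> R) (H1 : forall i z, (i < 4)%nat -> is_derive (e0 i) z (e0 (S i) z))
  (H2 : forall i z, (i <= 4)%nat -> continuous (e0 i) z) j x t : (j < 3)%nat ->
  T (fun m => m * KP1 m) (sA e0 j) x t = 3/7 * (2/3*t^3) * (T KP1 (sA e0 (S j)) x t - T (fun m => m * (m * KP1 m)) (sA e0 (S j)) x t).
Proof.
  intros Hj. pose proof (T_ibp (1/6) (sA e0 j) (sA e0 (S j)) x t ltac:(lra)) as H.
  change (Pk (1/6)) with KP1 in H. unfold sg in H.
  assert (E : (2 + 2 * (1/6)) * T (fun m => m * KP1 m) (sA e0 j) x t = 2 / 3 * t ^ 3 *
     (T KP1 (sA e0 (S j)) x t - T (fun m => m * (m * KP1 m)) (sA e0 (S j)) x t)).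
  { symmetry. apply H. intros; apply sA_der; auto; lia. intros; apply sA_cont; auto; lia. }
  lra.
Qed.
Lemma ibpB (e1 : nat -> R -> R) (H3 : forall i z, (i < 3)%nat -> is_derive (e1 i) z (e1 (S i) z))
  (H4 : forall i z, (i <= 3)%nat -> continuous (e1 i) z) j x t : (j < 3)%nat ->
  T (fun m => m * KP2 m) (sB e1 j) x t = 3/11 * (2/3*t^3) * (T KP2 (sB e1 (S j)) x t - T (fun m => m * (m * KP2 m)) (sB e1 (S j)) x t).
Proof.
  intros Hj. pose proof (T_ibp (5/6) (sB e1 j) (sB e1 (S j)) x t ltac:(lra)) as H.
  change (Pk (5/6)) with KP2 in H. unfold sg in H.
  assert (E : (2 + 2 * (5/6)) * T (fun m => m * KP2 m) (sB e1 j) x t = 2 / 3 * t ^ 3 *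
     (T KP2 (sB e1 (S j)) x t - T (fun m => m * (m * KP2 m)) (sB e1 (S j)) x t)).
  { symmetry. apply H. intros; apply sB_der; auto; lia. intros; apply sB_cont; auto; lia. }
  lra.
Qed.

Lemma pde (e0 e1 : nat -> R -> R) (H1 : forall i z, (i < 4)%nat -> is_derive (e0 i) z (e0 (S i) z))
  (H2 : forall i z, (i <= 4)%nat -> continuous (e0 i) z)
  (H3 : forall i z, (i < 3)%nat -> is_derive (e1 i) z (e1 (S i) z))
  (H4 : forall i z, (i <= 3)%nat -> continuous (e1 i) z) x t : 0 < t ->
  Rt e0 e1 x t + 2 * t ^ 2 * Rx e0 e1 x t
    = (Rf e0 e1 x t - Sf e0 e1 x t) / (2 * t) - 2 * t ^ 2 * (e1 1%nat x + e0 2%nat x * t) /\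
  St e0 e1 x t - 2 * t ^ 2 * Sx e0 e1 x t
    = (Sf e0 e1 x t - Rf e0 e1 x t) / (2 * t) + 2 * t ^ 2 * (e1 1%nat x - e0 2%nat x * t) /\
  Wt e0 e1 x t - 2 * t ^ 2 * Wx e0 e1 x t = - 2 * t * (Rf e0 e1 x t + e1 O x).
Proof.
  intros Ht.
  unfold Rt, Rx, St, Sx, Rf, Sf, Wt, Wx, Df, Uf, Dxf, Uxf, Dtf, Utf, utf.
  rewrite (ibpA e0 H1 H2 2 x t), (ibpA e0 H1 H2 1 x t), (ibpB e1 H3 H4 1 x t), (ibpB e1 H3 H4 2 x t) by lia.
  split; [|split]; field; lra.
Qed.

Lemma init (e0 e1 : nat -> R -> R) x :
  Rf e0 e1 x 0 = 0 /\ Sf e0 e1 x 0 = 0 /\ Wf e0 e1 x 0 = 0 /\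
  Rt e0 e1 x 0 = 0 /\ St e0 e1 x 0 = 0 /\ Wt e0 e1 x 0 = 0.
Proof.
  unfold Rf, Sf, Wf, Rt, St, Wt, Df, Uf, uf, Dtf, Utf, utf.
  repeat rewrite T_zero by kc.
  fold cc1 cc2. unfold sA, sB.
  generalize c1_pos c2_pos; intros.
  repeat split; field; lra.
Qed.

Theorem theoremA2 (x1 x2 : R) (u0 u1 : R -> R) (d0 d1 : nat -> R -> R) :
  x1 < x2 ->
  Ck_on x1 x2 4 u0 d0 ->
  Ck_on x1 x2 3 u1 d1 ->
  exists deltat : R,
    0 < deltat /\ deltat ^ 3 <= 3 * (x2 - x1) / 4 /\
    exists (Rf Rx Rt Sf Sx St Wf Wx Wt : R -> R -> R),
      C1_on2 (Dtilde x1 x2 deltat) Rf Rx Rt /\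
      C1_on2 (Dtilde x1 x2 deltat) Sf Sx St /\
      C1_on2 (Dtilde x1 x2 deltat) Wf Wx Wt /\
      (forall x t, Dtilde x1 x2 deltat x t -> 0 < t ->
         Rt x t + 2 * t ^ 2 * Rx x t
           = (Rf x t - Sf x t) / (2 * t) - 2 * t ^ 2 * (d1 1%nat x + d0 2%nat x * t) /\
         St x t - 2 * t ^ 2 * Sx x t
           = (Sf x t - Rf x t) / (2 * t) + 2 * t ^ 2 * (d1 1%nat x - d0 2%nat x * t) /\
         Wt x t - 2 * t ^ 2 * Wx x t = - 2 * t * (Rf x t + u1 x)) /\
      (forall x, x1 <= x <= x2 ->
         Rf x 0 = 0 /\ Sf x 0 = 0 /\ Wf x 0 = 0 /\
         Rt x 0 = 0 /\ St x 0 = 0 /\ Wt x 0 = 0).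
Proof.
  intros Hx Hu0 Hu1.
  pose (e0 := ext d0 x1 x2 4). pose (e1 := ext d1 x1 x2 3).
  assert (H1 : forall i z, (i < 4)%nat -> is_derive (e0 i) z (e0 (S i) z)).
  { intros i z Hi. apply (ext_der x1 x2 4 u0 d0); auto. }
  assert (H2 : forall i z, (i <= 4)%nat -> continuous (e0 i) z).
  { intros i z Hi. apply (ext_cont x1 x2 4 u0 d0); auto. }
  assert (H3 : forall i z, (i < 3)%nat -> is_derive (e1 i) z (e1 (S i) z)).
  { intros i z Hi. apply (ext_der x1 x2 3 u1 d1); auto. }
  assert (H4 : forall i z, (i <= 3)%nat -> continuous (e1 i) z).
  { intros i z Hi. apply (ext_cont x1 x2 3 u1 d1); auto. }
  exists (Rmin 1 (3 * (x2 - x1) / 4)).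
  assert (Hd0 : 0 < Rmin 1 (3 * (x2 - x1) / 4)) by (apply Rmin_pos; lra).
  assert (Hd1 : Rmin 1 (3 * (x2 - x1) / 4) <= 1) by apply Rmin_l.
  assert (Hd2 : Rmin 1 (3 * (x2 - x1) / 4) <= 3 * (x2 - x1) / 4) by apply Rmin_r.
  split; [auto|]. split.
  { set (dd := Rmin 1 (3 * (x2 - x1) / 4)) in *.
    assert (dd^3 <= dd). { simpl. assert (dd*dd <= 1) by nra. nra. } lra. }
  exists (Rf e0 e1), (Rx e0 e1), (Rt e0 e1), (Sf e0 e1), (Sx e0 e1), (St e0 e1),
         (Wf e0 e1), (Wx e0 e1), (Wt e0 e1).
  split; [apply C1_from; intros; [apply Rf_dx|apply Rf_dt|apply (conts e0 e1 H2 H4)|apply (conts e0 e1 H2 H4)]; auto|].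
  split; [apply C1_from; intros; [apply Sf_dx|apply Sf_dt|apply (conts e0 e1 H2 H4)|apply (conts e0 e1 H2 H4)]; auto|].
  split; [apply C1_from; intros; [apply Wf_dx|apply Wf_dt|apply (conts e0 e1 H2 H4)|apply (conts e0 e1 H2 H4)]; auto|].
  split.
  - intros x t [Ht Hxr] Htp.
    assert (Hxin : x1 <= x <= x2).
    { assert (0 <= t^3) by (apply pow_le; lra). lra. }
    destruct (pde e0 e1 H1 H2 H3 H4 x t Htp) as [A [B C]].
    assert (E1 : e1 1%nat x = d1 1%nat x) by (apply ext_in; auto).
    assert (E2 : e0 2%nat x = d0 2%nat x) by (apply ext_in; auto).
    assert (E3 : e1 0%nat x = u1 x).
    { unfold e1. rewrite ext_in by auto. destruct Hu1 as [Hu1' _]. apply Hu1'. exact Hxin. }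
    rewrite E1, E2 in A, B. rewrite E3 in C. auto.
  - intros x _. apply init.
Qed.
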